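(* Let $G_{\mathit{di}}$ be a knowledge connectivity graph that is Byzantine-safe for $F$ and whose sink component (vertex set $V_{\mathit{sink}}$) contains at least $2f+1$ correct processes. Then participant detectors, the threshold $f$, and the sink detector are sufficient to solve consensus in Stellar: when every process defines its slices by the slice construction below (using $\mathit{PD}_i$, $f$, and the sink detector), the set $W$ of all correct processes forms a consensus cluster, and hence is the (unique) maximal consensus cluster.
   Context: Processes and faults: $\Pi$ is a finite set of processes, $f\ge0$ a known integer; $W\subseteq\Pi$ is the set of correct processes and $F=\Pi\setminus W$ the Byzantine faulty processes, $|F|\le f$. Faulty processes may declare arbitrary slices. Slices and quorums: each process $i$ has a set $\mathcal{S}_i$ of slices (subsets of $\Pi$). $Q\subseteq\Pi$ is a quorum if every $i\in Q$ has some $S\in\mathcal{S}_i$ with $S\subseteq Q$; a quorum of $i$ is a quorum containing $i$. A set $I\subseteq W$ is intertwined if $|Q\cap Q'|>f$ for all $i,j\in I$, every quorum $Q$ of $i$ and every quorum $Q'$ of $j$. A set $I\subseteq W$ is a consensus cluster if (Quorum Intersection) $I$ is intertwined and (Quorum Availability) every $i\in I$ has a quorum $Q$ with $Q\subseteq I$. A maximal consensus cluster is a consensus cluster not strictly contained in another consensus cluster. (Known criterion, from prior work: all correct processes can solve consensus with the Stellar consensus protocol under partial synchrony if there is exactly one maximal consensus cluster and it equals $W$.) Knowledge graph: each process $i$ is given $\mathit{PD}_i\subseteq\Pi$; $G_{\mathit{di}}$ is the directed graph on $\Pi$ with edge $(i,j)$ iff $j\in\mathit{PD}_i$. A sink component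 is a strongly connected component of $G_{\mathit{di}}$ from which no path leads outside it. A directed graph is $k$-OSR if (1) its underlying undirected graph is connected; (2) its condensation into strongly connected components has exactly one sink $G_{\mathit{sink}}$; (3) $G_{\mathit{sink}}$ is $k$-strongly connected (every ordered pair of its nodes joined by $k$ node-disjoint directed paths); (4) from every node outside $G_{\mathit{sink}}$ to every node in it there are at least $k$ node-disjoint directed paths. $G_{\mathit{di}}$ is Byzantine-safe for $F$ if $|F|\le f$ and the graph obtained from $G_{\mathit{di}}$ by deleting $F$ is $(f+1)$-OSR. $V_{\mathit{sink}}$ denotes the vertex set of the unique sink component of $G_{\mathit{di}}$. Sink detector: an oracle with operation $\mathtt{get\_sink}(\mathit{PD}_i,f)$ returning $\langle \mathit{true},V_{\mathit{sink}}\rangle$ to $i\in V_{\mathit{sink}}$ and $\langle\mathit{false},V_i\rangle$ to $i\notin V_{\mathit{sink}}$, where $V_i\subseteq V_{\mathit{sink}}$ contains at least $f+1$ correct members of $V_{\mathit{sink}}$. Slice construction: let $m=\lceil (|V_{\mathit{sink}}|+f+1)/2\rceil$. Every correct $i\in V_{\mathit{sink}}$ has $\mathcal{S}_i=\{S\subseteq V_{\mathit{sink}}: |S|=m\}$; every correct $i\notin V_{\mathit{sink}}$ has $\mathcal{S}_i=\{S\subseteq V_i: |S|=f+1\}$. *)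

(* Defs.v *)
From mathcomp Require Import all_boot.
Set Implicit Arguments. Unset Strict Implicit. Unset Printing Implicit Defensive.

Section Defs.
Variable Pi : finType.

(* Edge (i,j) iff j \in PD i. *)

(* A directed path from u to v inside the vertex set X: [p] lists the vertices
   after u, ending with v; it is a simple path (u :: p has no repetition). *)
Definition dpath_in (PD : Pi -> {set Pi}) (X : {set Pi}) (u v : Pi) (p : seq Pi) :=
  [/\ u \in X, all (fun w => w \in X) p,
      path (fun a b => b \in PD a) u p, last u p = v & (p != [::]) && uniq (u :: p)].

Definition interior (p : seq Pi) : seq Pi := take (size p).-1 p.

Definition k_disjoint_paths (PD : Pi -> {set Pi}) (X : {set Pi}) (k : nat) (u v : Pi) :=
  exists ps : seq (seq Pi),
    [/\ k <= size ps, uniq ps,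
        (forall p, p \in ps -> dpath_in PD X u v p) &
        (forall i j, i < size ps -> j < size ps -> i != j ->
           [disjoint interior (nth [::] ps i) & interior (nth [::] ps j)])].

Definition reach_in (PD : Pi -> {set Pi}) (X : {set Pi}) :=
  connect [rel a b | [&& a \in X, b \in X & b \in PD a]].

Definition ureach_in (PD : Pi -> {set Pi}) (X : {set Pi}) :=
  connect [rel a b | [&& a \in X, b \in X & (b \in PD a) || (a \in PD b)]].

(* Such a set
   is automatically a (maximal) strongly connected component. *)
Definition is_sink_comp (PD : Pi -> {set Pi}) (X C : {set Pi}) :=
  [/\ C != set0, C \subset X,
      (forall u v, u \in C -> v \in C -> reach_in PD C u v) &
      (forall u v, u \in C -> v \in X -> v \in PD u -> v \in C)].

Definition k_OSR (PD : Pi -> {set Pi}) (X : {set Pi}) (k : nat) :=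
  (forall u v, u \in X -> v \in X -> ureach_in PD X u v) /\
      exists Csink,
        [/\ is_sink_comp PD X Csink,
            (forall C, is_sink_comp PD X C -> C = Csink),
            (forall u v, u \in Csink -> v \in Csink -> u != v ->
               k_disjoint_paths PD Csink k u v) &
            (forall u v, u \in X -> u \notin Csink -> v \in Csink ->
               k_disjoint_paths PD X k u v)].

Definition byzantine_safe (PD : Pi -> {set Pi}) (f : nat) (F : {set Pi}) :=
  #|F| <= f /\ k_OSR PD (~: F) f.+1.

(* The oracle answer get_sink(PD_i, f) of process i is modelled by sd i. *)
Definition sink_detector_spec (f : nat) (W Vsink : {set Pi})
    (sd : Pi -> bool * {set Pi}) :=
  forall i,
    (i \in Vsink -> sd i = (true, Vsink)) /\
    (i \notin Vsink -> [/\ (sd i).1 = false, (sd i).2 \subset Vsink &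
                           f.+1 <= #|(sd i).2 :&: W|]).

Definition slice_threshold (f : nat) (V : {set Pi}) : nat := uphalf (#|V| + f.+1).

Definition slice_construction (f : nat) (ans : bool * {set Pi}) : {set {set Pi}} :=
  if ans.1 then [set S : {set Pi} | (S \subset ans.2) && (#|S| == slice_threshold f ans.2)]
  else [set S : {set Pi} | (S \subset ans.2) && (#|S| == f.+1)].

Definition is_quorum (slices : Pi -> {set {set Pi}}) (Q : {set Pi}) :=
  forall i, i \in Q -> exists2 S, S \in slices i & S \subset Q.

Definition intertwined (slices : Pi -> {set {set Pi}}) (f : nat) (W I : {set Pi}) :=
  I \subset W /\
  forall i j Q Q', i \in I -> j \in I ->
    is_quorum slices Q -> i \in Q -> is_quorum slices Q' -> j \in Q' ->
    f < #|Q :&: Q'|.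

Definition consensus_cluster (slices : Pi -> {set {set Pi}}) (f : nat) (W I : {set Pi}) :=
  intertwined slices f W I /\
  forall i, i \in I -> exists Q, [/\ is_quorum slices Q, i \in Q & Q \subset I].

Definition maximal_consensus_cluster (slices : Pi -> {set {set Pi}}) (f : nat)
    (W I : {set Pi}) :=
  consensus_cluster slices f W I /\
  forall J, consensus_cluster slices f W J -> I \subset J -> J = I.

End Defs.

(* Main.v *)
Require Import Defs.
From mathcomp Require Import all_boot.
From mathcomp Require Import zify.
Set Implicit Arguments. Unset Strict Implicit.

Lemma exists_sub_card (T : finType) (A : {set T}) k :
  k <= #|A| -> exists2 S : {set T}, S \subset A & #|S| = k.
Proof.
move=> hk; exists [set x in take k (enum A)].
  by apply/subsetP=> x; rewrite inE => /mem_take; rewrite mem_enum.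
rewrite cardsE.
have /card_uniqP -> : uniq (take k (enum A)) by rewrite take_uniq ?enum_uniq.
rewrite size_take -cardE.
by case: ltngtP hk => // ->.
Qed.

Section S.
Variables (Pi : finType) (f : nat) (F Vsink : {set Pi})
  (sd : Pi -> bool * {set Pi}) (slices : Pi -> {set {set Pi}}).
Hypothesis hF : #|F| <= f.
Hypothesis hsd : sink_detector_spec f (~: F) Vsink sd.
Hypothesis hsl : forall i, i \in ~: F -> slices i = slice_construction f (sd i).

Lemma sl_in i S : i \in ~: F -> i \in Vsink -> S \in slices i ->
  S \subset Vsink /\ #|S| = slice_threshold f Vsink.
Proof.
move=> iW iV; rewrite hsl // /slice_construction (proj1 (hsd i) iV) /= inE.
by case/andP=> -> /eqP.
Qed.

Lemma sl_out i S : i \in ~: F -> i \notin Vsink -> S \in slices i ->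
  S \subset Vsink /\ #|S| = f.+1.
Proof.
move=> iW iV; have [h1 h2 _] := proj2 (hsd i) iV.
rewrite hsl // /slice_construction h1 /= inE => /andP[s /eqP ->]; split=> //.
exact: subset_trans s h2.
Qed.

Lemma quorum_big Q i : is_quorum slices Q -> i \in Q -> i \in ~: F ->
  slice_threshold f Vsink <= #|Q :&: Vsink|.
Proof.
move=> hQ iQ iW.
have [j [jQ jW jV]] : exists j, [/\ j \in Q, j \in ~: F & j \in Vsink].
  case: (boolP (i \in Vsink)) => iV; first by exists i.
  have [S Si SQ] := hQ i iQ; have [SV cS] := sl_out iW iV Si.
  case: (boolP (S \subset F)) => SF.
    by have := subset_leq_card SF; rewrite cS; lia.
  have [j jS jF] := subsetPn SF.
  by exists j; split; [exact: (subsetP SQ) | rewrite inE | exact: (subsetP SV)].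
have [S Sj SQ] := hQ j jQ; have [SV cS] := sl_in jW jV Sj.
by rewrite -cS; apply: subset_leq_card; rewrite subsetI SQ SV.
Qed.
End S.

Theorem theorem5 (Pi : finType) (f : nat) (F : {set Pi})
    (PD : Pi -> {set Pi}) (Vsink : {set Pi})
    (sd : Pi -> bool * {set Pi}) (slices : Pi -> {set {set Pi}}) :
  byzantine_safe PD f F ->
  is_sink_comp PD setT Vsink ->
  (forall C, is_sink_comp PD setT C -> C = Vsink) ->
  (f.*2).+1 <= #|Vsink :&: ~: F| ->
  sink_detector_spec f (~: F) Vsink sd ->
  (forall i, i \in ~: F -> slices i = slice_construction f (sd i)) ->
  consensus_cluster slices f (~: F) (~: F) /\
  maximal_consensus_cluster slices f (~: F) (~: F) /\
  (forall I, maximal_consensus_cluster slices f (~: F) I -> I = ~: F).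
Proof.
move=> [hF _] _ _ hc hsd hsl.
have hVF : #|Vsink| = #|Vsink :&: ~: F| + #|Vsink :&: F|.
  by rewrite -(cardsID F Vsink) addnC setDE.
have hVF' : #|Vsink :&: F| <= f.
  by apply: leq_trans hF; apply: subset_leq_card; apply: subsetIr.
have cc : consensus_cluster slices f (~: F) (~: F).
  split.
    split=> // i j Q Q' iW jW hQ iQ hQ' jQ'.
    have h1 := quorum_big hF hsd hsl hQ iQ iW.
    have h2 := quorum_big hF hsd hsl hQ' jQ' jW.
    have h3 := cardsU (Q :&: Vsink) (Q' :&: Vsink).
    have h4 : #|(Q :&: Vsink) :|: (Q' :&: Vsink)| <= #|Vsink|.
      by apply: subset_leq_card; rewrite subUset !subsetIr.
    have h5 : #|(Q :&: Vsink) :&: (Q' :&: Vsink)| <= #|Q :&: Q'|.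
      by apply: subset_leq_card; apply/subsetP=> x; rewrite !inE => /andP[/andP[-> _] /andP[-> _]].
    move: h1 h2; rewrite /slice_threshold uphalf_half /=.
    have := odd_double_half (#|Vsink| + f.+1). lia.
  move=> i iW; exists ((Vsink :&: ~: F) :|: [set i]); split.
  - move=> j; rewrite !inE => /orP[/andP[jV jW]|/eqP ->].
      have : slice_threshold f Vsink <= #|Vsink :&: ~: F|.
        rewrite /slice_threshold uphalf_half /=.
        have := odd_double_half (#|Vsink| + f.+1). lia.
      case/exists_sub_card=> S SV cS; exists S; last exact: subset_trans SV (subsetUl _ _).
      by rewrite hsl ?inE // /slice_construction (proj1 (hsd j) jV) /= inE cS eqxx
        (subset_trans SV (subsetIl _ _)).
    case: (boolP (i \in Vsink)) => iV.
      have : slice_threshold f Vsink <= #|Vsink :&: ~: F|.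
        rewrite /slice_threshold uphalf_half /=.
        have := odd_double_half (#|Vsink| + f.+1). lia.
      case/exists_sub_card=> S SV cS; exists S; last exact: subset_trans SV (subsetUl _ _).
      by rewrite hsl // /slice_construction (proj1 (hsd i) iV) /= inE cS eqxx
        (subset_trans SV (subsetIl _ _)).
    have [h1 h2 h3] := proj2 (hsd i) iV.
    case/exists_sub_card: h3 => S SV cS; exists S; last first.
      apply: subset_trans (subsetUl _ _); apply: subset_trans SV _.
      by rewrite setSI.
    by rewrite hsl // /slice_construction h1 /= inE cS eqxx (subset_trans SV (subsetIl _ _)).
  - by rewrite !inE eqxx orbT.
  - by rewrite subUset subsetIr sub1set.
have mc : maximal_consensus_cluster slices f (~: F) (~: F).
  split=> // J [[JW _] _] WJ; apply/eqP; by rewrite eqEsubset JW WJ.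
split=> //; split=> // I [[[IW _] _] hI].
by apply/esym/hI=> //.
Qed.
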